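(* Let $T$ be a tree with no vertex of valency one, with the two parts of its natural bipartition denoted $V_1, V_2$. Suppose $G\le \mathrm{Aut}(T)$ is closed and fixes $V_1$ and $V_2$ setwise. Then $G|_{V_i}$ is closed in $\mathrm{Sym}(V_i)$ for $i=1,2$. Moreover, if for every vertex $v$ the group $G_v|_{B(v)}$ is closed in $\mathrm{Sym}(B(v))$, then the following are equivalent: (1) for all $v\in V_1$ and $w\in V_2$, all point stabilisers in $G_v|_{B(v)}$ are compact and $G_w|_{B(w)}$ is compact; (2) all point stabilisers in $G|_{V_2}$ are compact.
   Context: $B(v)$ is the set of neighbours of $v$; $G_v$ is the stabiliser of $v$ and $G_v|_{B(v)}$ the permutation group it induces on $B(v)$; $G|_{V_i}$ is the permutation group induced by $G$ on $V_i$. For any set $V$, $\mathrm{Sym}(V)$ carries the permutation topology (topology of pointwise convergence, with pointwise stabilisers of finite subsets forming a basis of identity neighbourhoods), and $\mathrm{Aut}(T)$ carries this topology as a group of permutations of $VT$. *)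

(* Defs.v *)
From HB Require Import structures.
From mathcomp Require Import all_boot all_order all_algebra.
From mathcomp Require Import all_classical all_reals topology.
Set Implicit Arguments. Unset Strict Implicit. Unset Printing Implicit Defensive.
Local Open Scope classical_set_scope.

Definition simple_graph (V : Type) (E : rel V) : Prop :=
  (forall x y, E x y = E y x) /\ (forall x, ~~ E x x).

Definition connected_graph (V : eqType) (E : rel V) : Prop :=
  forall x y : V, exists p : seq V, path E x p /\ last x p = y.

(** acyclic: no cycle x :: p (at least 3 distinct vertices, consecutive
    ones adjacent, last adjacent to first) *)
Definition acyclic_graph (V : eqType) (E : rel V) : Prop :=
  ~ exists (x : V) (p : seq V),
      [/\ 2 <= size p, uniq (x :: p), path E x p & E (last x p) x].

Definition is_tree (V : eqType) (E : rel V) : Prop :=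
  [/\ simple_graph E, connected_graph E & acyclic_graph E].

(** B(v) = neighbours of v; v has valency one iff B(v) is a singleton *)
Definition valency_one (V : Type) (E : rel V) (v : V) : Prop :=
  exists u, E v u /\ forall w, E v w -> w = u.

(** proper 2-colouring: the two parts of the bipartition are
    V_b = [set x | c x == b] *)
Definition bipartition (V : Type) (E : rel V) (c : V -> bool) : Prop :=
  forall x y, E x y -> c x != c y.

Definition part (V : Type) (c : V -> bool) (b : bool) : pred V :=
  fun x => c x == b.

Definition is_aut (V : Type) (E : rel V) (g : V -> V) : Prop :=
  bijective g /\ forall x y, E (g x) (g y) = E x y.

Definition subgroup_Aut (V : Type) (E : rel V) (G : set (V -> V)) : Prop :=
  [/\ (forall g, G g -> is_aut E g),
      G id,
      (forall g h, G g -> G h -> G (g \o h))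
    & (forall g, G g -> exists2 h, G h & cancel g h /\ cancel h g)].

(** Sym(X) with the permutation topology: the subspace of bijections of the
    space of functions X -> X with the topology of pointwise convergence,
    X being discrete. *)
Definition ptws_space (X : choiceType) := {ptws X -> discrete_topology X}.

Definition closed_in_Sym (X : choiceType) (S : set (X -> X)) : Prop :=
  forall f : ptws_space X, bijective f ->
    closure (S : set (ptws_space X)) f -> S f.

Definition closed_in_Aut (V : choiceType) (E : rel V) (G : set (V -> V)) : Prop :=
  forall f : ptws_space V, is_aut E f ->
    closure (G : set (ptws_space V)) f -> G f.

(** compactness in Sym(X) (compactness of a subset is intrinsic) *)
Definition compact_in_Sym (X : choiceType) (S : set (X -> X)) : Prop :=
  compact (S : set (ptws_space X)).

Definition stab (X : Type) (S : set (X -> X)) (x : X) : set (X -> X) :=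
  [set g | S g /\ g x = x].

Definition induced_on (V : Type) (P : pred V) (S : set (V -> V)) :
    set ({x : V | P x} -> {x : V | P x}) :=
  [set p | exists2 g, S g & forall x, val (p x) = g (val x)].
Arguments induced_on {V} P S _.
Arguments stab {X} S x _.

(* Main.v *)
Require Import Defs.
From HB Require Import structures.
From mathcomp Require Import all_boot all_order all_algebra.
From mathcomp Require Import all_classical all_reals topology.
Set Implicit Arguments. Unset Strict Implicit. Unset Printing Implicit Defensive.
Local Open Scope classical_set_scope.


Section Top.
Variable X : choiceType.

Definition agree_on (s : seq X) (g f : X -> X) := forall x, x \in s -> g x = f x.

Lemma nbhs_agree (f : ptws_space X) (s : seq X) :
  nbhs f [set g : ptws_space X | agree_on s g f].
Proof.
elim: s => [|a s IH].
  by apply: filterS filterT => g _ x; rewrite in_nil.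
have ev : nbhs f [set g : ptws_space X | g a = f a].
  have := @proj_continuous X (fun _ => discrete_topology X) a f.
  move=> H; exact: (H [set f a] (@discrete_set1 (discrete_topology X) (f a))).
apply: filterS (filterI ev IH) => g [ga gs] x; rewrite in_cons => /orP[/eqP->|] //.
exact: gs.
Qed.

Lemma closureP (A : set (X -> X)) (f : ptws_space X) :
  closure (A : set (ptws_space X)) f <->
  forall s : seq X, exists2 g, A g & agree_on s g f.
Proof.
split.
  move=> cl s; have [g [Ag Ng]] := cl _ (nbhs_agree f s).
  by exists g.
move=> H; rewrite closureEcvg.
pose B := fun s : seq X => (A : set (ptws_space X)) `&` [set g | agree_on s g f].
have FF : Filter (filter_from setT B).
  apply: filter_from_filter; first by exists [::].
  move=> s t _ _; exists (s ++ t) => // g [Ag Hg]; split; split => //;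
    move=> x xs; apply: Hg; rewrite mem_cat xs ?orbT //.
have PF : ProperFilter (filter_from setT B).
  apply: filter_from_proper => s _; have [g Ag Hg] := H s; by exists g.
exists (filter_from setT B) => //; split.
  apply/cvg_sup => t.
  apply/cvg_image.
    apply/seteqP; split => // u _; exists (fun _ => u) => //.
  move=> U /= Uft.
  exists ([set g | B [:: t] g] `|` [set g : ptws_space X | U (g t)]).
    by exists [:: t] => // g Bg; left.
  have Uf : U (f t) := nbhs_singleton Uft.
  apply/seteqP; split => [_ [g [[_ Hg]|Ug] <-]|u Uu] //.
    by rewrite (Hg t (mem_head _ _)).
  by exists (fun _ => u) => //; right.
move=> C HC; exists [::] => // g [Ag _]; exact: HC.
Qed.

Lemma compact_orbit (S : set (X -> X)) x :
  compact_in_Sym S -> finite_set ((fun g => g x) @` S).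
Proof.
move=> cS; apply: contrapT => Oinf.
pose B := fun K : seq X => (S : set (ptws_space X)) `&` [set g | g x \notin K].
have FF : Filter (filter_from setT B).
  apply: filter_from_filter; first by exists [::].
  move=> K L _ _; exists (K ++ L) => // g [Sg] /=; rewrite mem_cat negb_or => /andP[h1 h2].
  by split; split.
have PF : ProperFilter (filter_from setT B).
  apply: filter_from_proper => K _; apply/set0P/negP => /eqP E.
  apply: Oinf; apply: (sub_finite_set _ (finite_seq K)) => _ [g Sg <-].
  apply: contrapT => gK; have : B K g by split => //; apply/negP.
  by rewrite E.
have FS : filter_from setT B S by exists [::] => // g [].
have [p [Sp cl]] := cS _ PF FS.
have FB : filter_from setT B (B [:: p x]) by exists [:: p x].
have [g [[Sg gx] ag]] := cl _ _ FB (nbhs_agree p [:: x]).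
by move: gx => /=; rewrite (ag x (mem_head _ _)) mem_head.
Qed.
Lemma closure_bij (S : set (X -> X)) (f : ptws_space X) :
  (forall g, S g -> injective g) -> (forall g, S g -> exists2 h, S h & cancel h g) ->
  (forall x, finite_set ((fun g => g x) @` S)) ->
  closure (S : set (ptws_space X)) f -> bijective f.
Proof.
move=> Sinj Sinv Sfin /closureP clf.
have finj : injective f.
  move=> x1 x2 e; have [g Sg ag] := clf [:: x1; x2].
  apply: (Sinj g Sg); rewrite (ag x1) ?(ag x2) ?inE ?eqxx ?orbT //.
have fsurj : forall y, exists x, f x = y.
  move=> y; have [s Es] := (finite_seqP _).1 (Sfin y).
  have [g Sg ag] := clf s; have [h Sh hK] := Sinv g Sg.
  exists (h y); rewrite -(ag (h y)) ?hK //.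
  have : [set g y | g in S] (h y) by exists h.
  by rewrite Es.
have [k kP] := choice fsurj.
exists k => // x; apply: finj; exact: kP.
Qed.

Lemma orbit_compact (S : set (X -> X)) :
  closed_in_Sym S -> (forall g, S g -> injective g) ->
  (forall g, S g -> exists2 h, S h & cancel h g) ->
  (forall x, finite_set ((fun g => g x) @` S)) -> compact_in_Sym S.
Proof.
move=> Scl Sinj Sinv Sfin.
apply: (@subclosed_compact _ _ [set f : ptws_space X | forall x, ((fun g => g x) @` S) (f x)]).
- move=> f clf; apply: Scl => //; exact: closure_bij clf.
- exact (@tychonoff X (fun _ => discrete_topology X) (fun x => (fun g => g x) @` S) (fun x => @finite_compact (discrete_topology X) _ (Sfin x))).
- by move=> f Sf x; exists f.
Qed.
Lemma stab_closed (S : set (X -> X)) x :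
  closed_in_Sym S -> closed_in_Sym (stab S x).
Proof.
move=> Scl f bf /closureP cf; split.
  apply: Scl => //; apply/closureP => s; have [g [Sg _] ag] := cf s.
  by exists g.
have [g [_ gx] ag] := cf [:: x]; by rewrite -(ag x (mem_head _ _)).
Qed.
End Top.


Definition orb (X : Type) (S : set (X -> X)) (y : X) := [set g y | g in S].

Section Ind.
Variables (V : choiceType) (P : pred V) (S : set (V -> V)).
Hypothesis Sinv_on : forall g u, S g -> P u -> P (g u).
Hypothesis Sinj : forall g, S g -> injective g.
Hypothesis Sinv : forall g, S g -> exists2 h, S h & cancel h g.

Definition lift_on (g : V -> V) (Sg : S g) : {x : V | P x} -> {x : V | P x} :=
  fun z => exist (fun x => P x) (g (val z)) (Sinv_on Sg (valP z)).

Lemma lift_onP g (Sg : S g) : induced_on P S (lift_on Sg).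
Proof. by exists g. Qed.

Lemma ind_inj q : induced_on P S q -> injective q.
Proof.
case=> g Sg qg x y /(congr1 val); rewrite !qg => /(Sinj Sg); exact: val_inj.
Qed.

Lemma ind_inv q : induced_on P S q -> exists2 r, induced_on P S r & cancel r q.
Proof.
case=> g Sg qg; have [h Sh hK] := Sinv Sg.
exists (lift_on Sh); first exact: lift_onP.
by move=> z; apply: val_inj; rewrite qg /= hK.
Qed.

Lemma ind_orb (x y : {x : V | P x}) :
  val @` orb (stab (induced_on P S) x) y = orb (stab S (val x)) (val y).
Proof.
apply/seteqP; split.
  move=> _ [_ [q [[g Sg qg] qx] <-] <-]; exists g; last by rewrite qg.
  by split => //; rewrite -qg qx.
move=> _ [g [Sg gx] <-]; exists (lift_on Sg y) => //.
exists (lift_on Sg); split; first exact: lift_onP.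
by apply: val_inj; rewrite /= gx.
Qed.

Lemma ind_orb_fin (x y : {x : V | P x}) :
  finite_set (orb (stab (induced_on P S) x) y) <->
  finite_set (orb (stab S (val x)) (val y)).
Proof.
rewrite -ind_orb; split; first exact: finite_image.
move=> F; apply: (sub_finite_set _ (finite_image (fun v => odflt y (insub v)) F)).
move=> z Oz; exists (val z); first by exists z.
by rewrite valK.
Qed.
Lemma ind_orb0 (y : {x : V | P x}) :
  val @` orb (induced_on P S) y = orb S (val y).
Proof.
apply/seteqP; split.
  by move=> _ [_ [q [g Sg qg] <-] <-]; exists g; last by rewrite qg.
move=> _ [g Sg <-]; exists (lift_on Sg y) => //.
by exists (lift_on Sg); first exact: lift_onP.
Qed.

Lemma ind_orb_fin0 (y : {x : V | P x}) :
  finite_set (orb (induced_on P S) y) <-> finite_set (orb S (val y)).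
Proof.
rewrite -ind_orb0; split; first exact: finite_image.
move=> F; apply: (sub_finite_set _ (finite_image (fun v => odflt y (insub v)) F)).
move=> z Oz; exists (val z); first by exists z.
by rewrite valK.
Qed.
End Ind.

Section Stab.
Variable X : choiceType.
Lemma stab_inj (S : set (X -> X)) x : (forall g, S g -> injective g) ->
  forall g, stab S x g -> injective g.
Proof. by move=> H g [Sg _]; exact: H. Qed.

Lemma stab_inv (S : set (X -> X)) x : (forall g, S g -> injective g) ->
  (forall g, S g -> exists2 h, S h & cancel h g) ->
  forall g, stab S x g -> exists2 h, stab S x h & cancel h g.
Proof.
move=> Sinj Sinv g [Sg gx]; have [h Sh hK] := Sinv g Sg.
exists h => //; split => //; apply: (Sinj g Sg); by rewrite hK gx.
Qed.
End Stab.


Lemma inj_surj_bij (T : Type) (f : T -> T) : injective f -> (forall y, exists x, f x = y) -> bijective f.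
Proof. move=> fi fs; have [k kP] := choice fs; exists k => // x; apply: fi; exact: kP. Qed.

Lemma bneq (x y : bool) : x != y -> ~~ x = y.
Proof. by case: x; case: y. Qed.

Section Tree.
Variables (V : choiceType) (E : rel V) (c : V -> bool) (G : set (V -> V)).
Hypothesis HT : is_tree E.
Hypothesis HL : forall v, ~ valency_one E v.
Hypothesis HB : bipartition E c.
Hypothesis HG : subgroup_Aut E G.
Hypothesis HC : forall g x, G g -> c (g x) = c x.

Lemma Esym x y : E x y = E y x.
Proof. by case: HT => [[]]. Qed.

Lemma Eirr x : E x x = false.
Proof. by case: HT => [[_ /(_ x) /negbTE]]. Qed.

Lemma Ene x y : E x y -> x != y.
Proof. by apply: contraTneq => ->; rewrite Eirr. Qed.

Lemma uniq_cn a a' y z : E a y -> E a z -> E a' y -> E a' z -> y != z -> a = a'.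
Proof.
move=> ay az a'y a'z yz; case: (eqVneq a a') => // aa'.
case: HT => _ _ H; exfalso; apply: H; exists y, [:: a; z; a']; split => //=.
  have ya : y != a by rewrite eq_sym Ene // Esym.
  have ya' : y != a' by rewrite eq_sym Ene // Esym.
  have za' : z != a' by rewrite eq_sym Ene // Esym.
  have az' : a != z by rewrite Ene.
  by rewrite !inE !negb_or ya yz ya' az' aa' za'.
by rewrite Esym ay az Esym a'z.
Qed.

Lemma Gaut g : G g -> is_aut E g.
Proof. by case: HG => H _ _ _; exact: H. Qed.
Lemma Ginj g : G g -> injective g.
Proof. by move/Gaut => [/bij_inj]. Qed.
Lemma GE g x y : G g -> E (g x) (g y) = E x y.
Proof. by move/Gaut => [_]. Qed.
Lemma Ginv2 g : G g -> exists2 h, G h & cancel g h /\ cancel h g.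
Proof. by case: HG => _ _ _; apply. Qed.
Lemma Ginv g : G g -> exists2 h, G h & cancel h g.
Proof. by move/Ginv2 => [h Gh [_ ?]]; exists h. Qed.
Lemma Gcomp g h : G g -> G h -> G (g \o h).
Proof. by case: HG => _ _ H _; exact: H. Qed.

Lemma two_nbrs v u : E v u -> exists2 u', E v u' & u' != u.
Proof.
move=> vu; apply: contrapT => H; case: (@HL v); exists u; split => // w vw.
apply: contrapT => wu; apply: H; exists w => //; exact/eqP.
Qed.

Lemma isolated v : (forall u, ~ E v u) -> forall y, y = v.
Proof.
move=> iso y; case: HT => _ /(_ v y) [[|a p] [pa <-]] //.
by move: pa => /= /andP[/iso].
Qed.

Lemma colour_nbr x y : E x y -> c y = ~~ c x.
Proof. by move/HB; case: (c x); case: (c y). Qed.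

Hypothesis GclA : closed_in_Aut E G.

Lemma part1 b : closed_in_Sym (induced_on (part c b) G).
Proof.
move=> p pbij /closureP cp.
pose pv : V -> V := fun v => oapp (fun w => val (p w)) v (insub v : option {x | part c b x}).
have pvE : forall w : {x | part c b x}, pv (val w) = val (p w).
  by move=> w; rewrite /pv valK.
have A : forall s : seq V, exists2 g, G g & forall x, x \in s -> c x = b -> g x = pv x.
  move=> s; have [q [g Gg qg] aq] := cp (pmap insub s).
  exists g => // x xs cx.
  have Px : part c b x by rewrite /part cx.
  rewrite /pv insubT /=; have := qg (Sub x Px); rewrite SubK => <-; congr val; apply: aq.
  by rewrite mem_pmap_sub.
pose Dp := fun v (us : V * seq V) => forall g, G g ->
   (forall x, x \in us.2 -> c x = b -> g x = pv x) -> g v = us.1.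
have Dex : forall v, exists us, Dp v us.
  move=> v; case: (eqVneq (c v) b) => cv.
    by exists (pv v, [:: v]) => g _ /(_ v (mem_head _ _) cv).
  case: (pselect (exists u, E v u)) => [[u1 vu1]|noN]; last first.
    have iso := isolated (fun u vu => noN (ex_intro _ u vu)).
    by exists (v, [::]) => g _ _ /=; apply: iso.
  have [u2 vu2 u21] := two_nbrs vu1.
  have [g0 Gg0 ag0] := A [:: u1; u2].
  have cu : forall u, E v u -> c u = b.
    by move=> u /colour_nbr ->; exact: bneq.
  exists (g0 v, [:: u1; u2]) => g Gg /= ag.
  have e1 : g u1 = g0 u1 by rewrite ag ?ag0 ?inE ?eqxx ?orbT ?cu.
  have e2 : g u2 = g0 u2 by rewrite ag ?ag0 ?inE ?eqxx ?orbT ?cu.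
  apply: (@uniq_cn _ _ (g u1) (g u2)).
  - by rewrite GE.
  - by rewrite GE.
  - by rewrite e1 GE.
  - by rewrite e2 GE.
  - by apply: contra_neq u21 => /(Ginj Gg) ->.
have [F FP] := choice Dex.
pose f := fun v => (F v).1.
have fA : forall s, exists2 g, G g & agree_on s g f /\ (forall x, x \in s -> c x = b -> g x = pv x).
  move=> s; have [g Gg ag] := A (s ++ flatten (map (fun v => (F v).2) s)).
  exists g => //; split; last by move=> x xs; apply: ag; rewrite mem_cat xs.
  move=> x xs; apply: (FP x) => // y yF; apply: ag; rewrite mem_cat; apply/orP; right.
  by apply/flattenP; exists (F x).2 => //; apply: map_f.
have fpv : forall v, c v = b -> f v = pv v.
  move=> v cv; have [g _ [ag ag']] := fA [:: v].
  by rewrite -ag ?ag' ?mem_head.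
have finj : injective f.
  move=> x y e; have [g Gg [ag _]] := fA [:: x; y].
  by apply: (Ginj Gg); rewrite !ag ?inE ?eqxx ?orbT.
have fE : forall x y, E (f x) (f y) = E x y.
  move=> x y; have [g Gg [ag _]] := fA [:: x; y].
  by rewrite -!ag ?inE ?eqxx ?orbT // GE.
have [pinv pK pKV] := pbij.
have fsurjb : forall y, c y = b -> exists x, f x = y.
  move=> y cy; have Py : part c b y by rewrite /part cy.
  exists (val (pinv (Sub y Py))).
  by rewrite fpv ?pvE ?pKV //; move: (valP (pinv (Sub y Py))); rewrite /part => /eqP.
have fsurj : forall y, exists x, f x = y.
  move=> y; case: (eqVneq (c y) b) => cy; first exact: fsurjb.
  case: (pselect (exists u, E y u)) => [[y1 yy1]|noN]; last first.
    have iso := isolated (fun u vu => noN (ex_intro _ u vu)).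
    by exists y; apply: iso.
  have [y2 yy2 y21] := two_nbrs yy1.
  have cu : forall u, E y u -> c u = b.
    by move=> u /colour_nbr ->; exact: bneq.
  have [x1 fx1] := fsurjb _ (cu _ yy1).
  have [x2 fx2] := fsurjb _ (cu _ yy2).
  have [g Gg [ag _]] := fA [:: x1; x2].
  have [h Gh [ghK hgK]] := Ginv2 Gg.
  have ex1 : E (h y) x1 by rewrite -(GE _ _ Gg) hgK ag ?fx1 ?inE ?eqxx.
  have ex2 : E (h y) x2 by rewrite -(GE _ _ Gg) hgK ag ?fx2 ?inE ?eqxx ?orbT.
  exists (h y); apply: (@uniq_cn _ _ y1 y2) => //; last by rewrite eq_sym.
  - by rewrite -fx1 fE.
  - by rewrite -fx2 fE.
have fbij : bijective f := inj_surj_bij finj fsurj.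
have Gf : G f.
  apply: GclA; first by split.
  apply/closureP => s; have [g Gg [ag _]] := fA s; by exists g.
exists f => // w; rewrite fpv ?pvE //.
by move: (valP w); rewrite /part => /eqP.
Qed.


Lemma P2_P1 :
  (forall x y, c x = false -> c y = false -> finite_set (orb (stab G x) y)) ->
  (forall v x y, c v = true -> E v x -> E v y -> finite_set (orb (stab (stab G v) x) y)) /\
  (forall w y, c w = false -> E w y -> finite_set (orb (stab G w) y)).
Proof.
move=> P2; split.
  move=> v x y cv vx vy.
  have cx : c x = false by rewrite (colour_nbr vx) cv.
  have cy : c y = false by rewrite (colour_nbr vy) cv.
  apply: (sub_finite_set _ (P2 x y cx cy)) => _ [g [[Gg gv] gx] <-].
  by exists g.
move=> w y cw wy.
have yw : E y w by rewrite Esym.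
have [y' yy' y'w] := two_nbrs yw.
have cy : c y = true by rewrite (colour_nbr wy) cw.
have cy' : c y' = false by rewrite (colour_nbr yy') cy.
have cnex : forall a, exists u, (exists u', E w u' /\ E a u') -> E w u /\ E a u.
  move=> a; case: (pselect (exists u', E w u' /\ E a u')) => [[u' H]|H].
    by exists u'.
  by exists a.
have [cn cnP] := choice cnex.
apply: (sub_finite_set _ (finite_image cn (P2 w y' cw cy'))) => _ [g [Gg gw] <-].
exists (g y'); first by exists g.
have H : exists u', E w u' /\ E (g y') u'.
  by exists (g y); split; [rewrite -{1}gw GE // | rewrite GE // Esym].
have [h1 h2] := cnP _ H.
apply: (@uniq_cn _ _ w (g y')) => //.
- by rewrite Esym.
- by rewrite Esym.
- by rewrite -{1}gw GE // Esym.
- by rewrite GE // Esym.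
- by rewrite -{1}gw; apply: contra_neq y'w => /(Ginj Gg) ->.
Qed.

Lemma P1_P2 :
  (forall v x y, c v = true -> E v x -> E v y -> finite_set (orb (stab (stab G v) x) y)) ->
  (forall w y, c w = false -> E w y -> finite_set (orb (stab G w) y)) ->
  (forall x y, c x = false -> c y = false -> finite_set (orb (stab G x) y)).
Proof.
move=> P1a P1b x y cx _.
have Ostep : forall q z, path E x q -> E (last x q) z ->
    finite_set (orb [set h | G h /\ forall u, u \in x :: q -> h u = u] z).
  move=> q z; case cm: (c (last x q)) => pq ez.
    move: pq ez cm; case/lastP: q => [|q' m] pq ez cm; first by rewrite /= cx in cm.
    rewrite last_rcons in ez cm.
    have em : E (last x q') m by move: pq; rewrite rcons_path => /andP[].
    have me : E m (last x q') by rewrite Esym.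
    apply: (sub_finite_set _ (P1a m (last x q') z cm me ez)) => _ [h [Gh hl] <-].
    have sub : {subset x :: q' <= x :: rcons q' m}.
      by move=> u; rewrite !inE mem_rcons inE; case/orP => ->; rewrite ?orbT.
    exists h => //; split; [split|] => //; apply: hl.
      by rewrite inE mem_rcons mem_head orbT.
    exact/sub/mem_last.
  apply: (sub_finite_set _ (P1b (last x q) z cm ez)) => _ [h [Gh hl] <-].
  exists h => //; split => //; apply: hl; exact: mem_last.
have walk : forall p, path E x p -> finite_set [set map g (x :: p) | g in stab G x].
  elim/last_ind => [_|q z IH].
    apply: (sub_finite_set _ (finite_set1 [:: x])) => _ [g [_ gx] <-] /=.
    by rewrite gx.
  rewrite rcons_path => /andP[pq ez].
  have Tfin := IH pq.
  pose T := [set map g (x :: q) | g in stab G x].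
  have gex : forall t, exists g, T t -> stab G x g /\ map g (x :: q) = t.
    move=> t; case: (pselect (T t)) => [[g Sg <-]|nT]; first by exists g.
    by exists id.
  have [gt gtP] := choice gex.
  apply: (sub_finite_set _ (bigcup_finite Tfin (fun t _ => finite_image (fun a => rcons t (gt t a)) (Ostep q z pq ez)))).
  move=> _ [g [Gg gx] <-].
  have Tt : T (map g (x :: q)) by exists g.
  have [[Ggt gtx] gtm] := gtP _ Tt.
  have [k Gk [gtK kgtK]] := Ginv2 Ggt.
  exists (map g (x :: q)) => //.
  exists (k (g z)).
    exists (k \o g); split => //; first exact: Gcomp.
    move=> u ul /=; have := (eq_in_map _ _ _).2 gtm u ul; move=> <-.
    by rewrite gtK.
  by rewrite kgtK -rcons_cons map_rcons.
case: HT => _ /(_ x y) [p [pp pl]] _.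
apply: (sub_finite_set _ (finite_image (last x) (walk p pp))) => _ [g [Gg gx] <-].
exists (map g (x :: p)); first by exists g.
by rewrite map_cons /= last_map pl.
Qed.

End Tree.


Lemma compact_ind_stab (V : choiceType) (P : pred V) (S : set (V -> V)) :
  (forall g u, S g -> P u -> P (g u)) -> (forall g, S g -> injective g) ->
  (forall g, S g -> exists2 h, S h & cancel h g) ->
  closed_in_Sym (induced_on P S) ->
  forall x : {x : V | P x}, compact_in_Sym (stab (induced_on P S) x) <->
            forall y : {x : V | P x}, finite_set (orb (stab S (val x)) (val y)).
Proof.
move=> Pinv Sinj Sinv Scl x; split.
  move=> cS y; apply/(ind_orb_fin Pinv); exact: compact_orbit.
move=> F; apply: orbit_compact.
- exact: stab_closed.
- apply: stab_inj; exact: ind_inj.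
- apply: stab_inv; [exact: ind_inj | exact: ind_inv].
- by move=> y; apply/(ind_orb_fin Pinv).
Qed.

Lemma compact_ind (V : choiceType) (P : pred V) (S : set (V -> V)) :
  (forall g u, S g -> P u -> P (g u)) -> (forall g, S g -> injective g) ->
  (forall g, S g -> exists2 h, S h & cancel h g) ->
  closed_in_Sym (induced_on P S) ->
  compact_in_Sym (induced_on P S) <->
            forall y : {x : V | P x}, finite_set (orb S (val y)).
Proof.
move=> Pinv Sinj Sinv Scl; split.
  move=> cS y; apply/(ind_orb_fin0 Pinv); exact: compact_orbit.
move=> F; apply: orbit_compact => //.
- exact: ind_inj.
- exact: ind_inv.
- by move=> y; apply/(ind_orb_fin0 Pinv).
Qed.

Unset Implicit Arguments.

Theorem lemma6p2 (V : choiceType) (E : rel V) (c : V -> bool)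
    (G : set (V -> V)) :
  is_tree E ->
  (forall v, ~ valency_one E v) ->
  bipartition E c ->
  subgroup_Aut E G ->
  closed_in_Aut E G ->
  (forall g x, G g -> c (g x) = c x) ->
  (forall b : bool, closed_in_Sym (induced_on (part c b) G)) /\
  ((forall v : V, closed_in_Sym (induced_on (E v) (stab G v))) ->
   ((forall v w : V, c v = true -> c w = false ->
       (forall x : {u : V | E v u},
          compact_in_Sym (stab (induced_on (E v) (stab G v)) x)) /\
       compact_in_Sym (induced_on (E w) (stab G w)))
    <->
    (forall x : {u : V | part c false u},
       compact_in_Sym (stab (induced_on (part c false) G) x)))).
Proof.
move=> HT HL HB HG GclA HC.
have Gi : forall g, G g -> injective g := @Ginj V E G HG.
have Gv : forall g, G g -> exists2 h, G h & cancel h g := @Ginv V E G HG.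
have GE' : forall g x y, G g -> E (g x) (g y) = E x y.
  by move=> g x y Gg; exact: (@GE V E G HG g x y Gg).
have cl1 : forall b : bool, closed_in_Sym (induced_on (part c b) G).
  by move=> b; exact: (@part1 V E c G HT HL HB HG GclA b).
split => // Hcl.
have Pinv2 : forall g u, G g -> part c false u -> part c false (g u).
  by move=> g u Gg; rewrite /part HC.
have PinvE : forall v g u, stab G v g -> E v u -> E v (g (u)).
  by move=> v g u [Gg gv] vu; rewrite -{1}gv GE'.
have Si : forall v g, stab G v g -> injective g.
  by move=> v; apply: stab_inj.
have Sv : forall v g, stab G v g -> exists2 h, stab G v h & cancel h g.
  by move=> v; apply: stab_inv.
have cfalse : forall x y, E x y -> c x = true -> c y = false.
  by move=> x y /(colour_nbr HB) -> ->.
have ctrue : forall x y, E x y -> c x = false -> c y = true.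
  by move=> x y /(colour_nbr HB) -> ->.
have P2iff : (forall x : {u : V | part c false u},
       compact_in_Sym (stab (induced_on (part c false) G) x)) <->
    (forall x y, c x = false -> c y = false -> finite_set (orb (stab G x) y)).
  split.
    move=> H x y cx cy.
    have px : part c false x by rewrite /part cx.
    have py : part c false y by rewrite /part cy.
    exact: ((compact_ind_stab Pinv2 Gi Gv (cl1 false) (exist _ x px)).1 (H _) (exist _ y py)).
  move=> H x; apply/(compact_ind_stab Pinv2 Gi Gv (cl1 false)) => y.
  by apply: H; [move: (valP x) | move: (valP y)]; rewrite /part => /eqP.
rewrite P2iff; split.
  move=> H1; apply: (@P1_P2 V E c G HT HG).
    move=> v x y cv vx vy.
    have := ((H1 v x cv (cfalse _ _ vx cv)).1 (exist _ x vx)).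
    move/(compact_ind_stab (PinvE v) (Si v) (Sv v) (Hcl v)).
    by move/(_ (exist _ y vy)).
  move=> w y cw wy.
  have yw : E y w by rewrite (Esym HT).
  have := ((H1 y w (ctrue _ _ wy cw) cw).2).
  move/(compact_ind (PinvE w) (Si w) (Sv w) (Hcl w)).
  by move/(_ (exist _ y wy)).
move=> H2; have [P1a P1b] := @P2_P1 V E c G HT HL HB HG H2.
move=> v w cv cw; split.
  move=> x; apply/(compact_ind_stab (PinvE v) (Si v) (Sv v) (Hcl v)) => y.
  exact: P1a cv (valP x) (valP y).
apply/(compact_ind (PinvE w) (Si w) (Sv w) (Hcl w)) => y.
exact: P1b cw (valP y).
Qed.
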